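(* Let $A\in\mathbb{R}^{m\times N}$, $q\in(1,\infty]$, and let $x\in\mathbb{R}^N$ be a nonzero $k$-sparse vector such that $$k<\inf_{h\in\ker(A)\setminus\{0\}}3^{\frac{q}{1-q}}s_q(h).$$ Then $x$ is the unique solution of $\min_{z\in\mathbb{R}^N\setminus\{0\}}\lVert z\rVert_1/\lVert z\rVert_q$ subject to $Az=Ax$.
   Context: For nonzero $h\in\mathbb{R}^N$ and $q\in(1,\infty)$, $s_q(h)=\left(\lVert h\rVert_1/\lVert h\rVert_q\right)^{q/(q-1)}$, and $s_\infty(h)=\lVert h\rVert_1/\lVert h\rVert_\infty$; for $q=\infty$ the factor $3^{q/(1-q)}$ is interpreted as $3^{-1}$. $\ker(A)=\{h: Ah=0\}$. A vector is $k$-sparse if it has at most $k$ nonzero entries. *)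

(* Defs.v *)
From HB Require Import structures.
From mathcomp Require Import all_boot all_order all_algebra.
From mathcomp Require Import all_classical all_reals ereal exp.
Set Implicit Arguments. Unset Strict Implicit. Unset Printing Implicit Defensive.
Import Order.TTheory GRing.Theory Num.Theory.
Local Open Scope ring_scope.

(* vectors of R^N are column vectors 'cV[R]_N; entries z i 0 *)

Definition l1norm (R : realType) (N : nat) (z : 'cV[R]_N) : R :=
  \sum_(i < N) `|z i 0|.

Definition linfnorm (R : realType) (N : nat) (z : 'cV[R]_N) : R :=
  \big[Num.max/0]_(i < N) `|z i 0|.

Definition lqnorm (R : realType) (N : nat) (q : \bar R) (z : 'cV[R]_N) : R :=
  match q with
  | r%:E => (\sum_(i < N) `|z i 0| `^ r) `^ r^-1
  | +oo%E => linfnorm z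
  | -oo%E => 0
  end.

Definition sq (R : realType) (N : nat) (q : \bar R) (h : 'cV[R]_N) : R :=
  match q with
  | r%:E => (l1norm h / lqnorm q h) `^ (r / (r - 1))
  | +oo%E => l1norm h / linfnorm h
  | -oo%E => 0
  end.

(* the factor 3^{q/(1-q)}, interpreted as 3^{-1} for q = oo *)
Definition three_factor (R : realType) (q : \bar R) : R :=
  match q with
  | r%:E => 3 `^ (r / (1 - r))
  | +oo%E => 3^-1
  | -oo%E => 0
  end.

Definition ksparse (R : realType) (N : nat) (k : nat) (x : 'cV[R]_N) : bool :=
  (#|[set i : 'I_N | x i ord0 != 0%R]| <= k)%N.

Definition is_solution (R : realType) (m N : nat) (q : \bar R)
    (A : 'M[R]_(m, N)) (b : 'cV[R]_m) (z : 'cV[R]_N) : Prop :=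
  z != 0 /\ A *m z = b /\
  forall w : 'cV[R]_N, w != 0 -> A *m w = b ->
    l1norm z / lqnorm q z <= l1norm w / lqnorm q w.

(* Main.v *)
Require Import Defs.
From HB Require Import structures.
From mathcomp Require Import all_boot all_order all_algebra.
From mathcomp Require Import all_classical all_reals ereal exp.
From mathcomp Require Import all_analysis lra ring.
Import Order.TTheory GRing.Theory Num.Theory.
Set Implicit Arguments. Unset Strict Implicit.
Local Open Scope ring_scope.

Section S.
Variable R : realType.

Definition ext N (a : 'I_N -> R) : nat -> R :=
  fun n => if insub n is Some i then a i else 0.

Lemma ext_val N (a : 'I_N -> R) (i : 'I_N) : ext a (nat_of_ord i) = a i.
Proof. by rewrite /ext valK. Qed.

Lemma ext_out N (a : 'I_N -> R) n : (N <= n)%N -> ext a n = 0.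
Proof. by move=> h; rewrite /ext insubF // ltnNge h. Qed.

Lemma Lnorm_fin N (a : 'I_N -> R) p : 0 < p ->
  Lnorm counting p%:E (EFin \o ext a) = ((\sum_i `|a i| `^ p) `^ p^-1)%:E.
Proof.
move=> p0.
rewrite Lnorm_counting//.
rewrite (nneseries_split 0 N); last by move=> k; rewrite lee_fin powR_ge0.
rewrite add0n ereal_series_cond eseries0 ?adde0; last first.
  by move=> n _ /andP[hn _]; rewrite /= ext_out // normr0 powR0 // gt_eqF.
rewrite big_mkord.
under eq_bigr do rewrite /= ext_val.
by rewrite sumEFin poweR_EFin.
Qed.

Lemma ext_add N (a b : 'I_N -> R) : (ext a \+ ext b)%R = ext (fun i => a i + b i).
Proof. by apply/funext => n; rewrite /ext /=; case: insub => //=; rewrite addr0. Qed.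

Lemma ext_mul N (a b : 'I_N -> R) : (ext a \* ext b)%R = ext (fun i => a i * b i).
Proof. by apply/funext => n; rewrite /ext /=; case: insub => //=; rewrite mulr0. Qed.

Lemma minkowski_fin N (a b : 'I_N -> R) p : 1 <= p ->
  (\sum_i `|a i + b i| `^ p) `^ p^-1 <=
  (\sum_i `|a i| `^ p) `^ p^-1 + (\sum_i `|b i| `^ p) `^ p^-1.
Proof.
move=> p1.
have p0 : 0 < p by apply: lt_le_trans p1.
have mf : measurable_fun [set: nat] (ext a) by [].
have mg : measurable_fun [set: nat] (ext b) by [].
have := @minkowski_EFin _ _ R counting (ext a) (ext b) p mf mg p1.
by rewrite ext_add !Lnorm_fin // -EFinD lee_fin.
Qed.

Lemma hoelder_fin N (a b : 'I_N -> R) p q : 0 < p -> 0 < q -> p^-1 + q^-1 = 1 ->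
  \sum_i `|a i * b i| <=
  (\sum_i `|a i| `^ p) `^ p^-1 * (\sum_i `|b i| `^ q) `^ q^-1.
Proof.
move=> p0 q0 pq.
have mf : measurable_fun [set: nat] (ext a) by [].
have mg : measurable_fun [set: nat] (ext b) by [].
have := @hoelder _ _ R counting (ext a) (ext b) p q mf mg p0 q0 pq.
rewrite ext_mul !Lnorm_fin // -EFinM lee_fin invr1 powRr1; last first.
  by rewrite sumr_ge0 // => i _; rewrite powR_ge0.
suff -> : \sum_i `|a i * b i| `^ 1 = \sum_i `|a i * b i| by [].
by apply: eq_bigr => i _; rewrite powRr1.
Qed.
End S.

Lemma nz_ex (R : realType) N (z : 'cV[R]_N) : z != 0 -> exists i, z i 0 != 0.
Proof.
move=> nz; case: (pickP (fun i => z i 0 != 0)) => [i hi|h]; first by exists i.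
move: nz; have -> : z = 0; last by rewrite eqxx.
apply/matrixP => i j; rewrite (ord1 j) mxE.
by move: (h i) => /= /negbFE/eqP.
Qed.

Section Inf.
Variables (R : realType) (N : nat).
Local Notation nq := (@lqnorm R N +oo%E).

Lemma inf_ge0 (z : 'cV[R]_N) : 0 <= nq z.
Proof. exact: bigmax_ge_id. Qed.

Lemma inf_le (z : 'cV[R]_N) i : `|z i 0| <= nq z.
Proof. rewrite /lqnorm /linfnorm; exact: (@le_bigmax _ _ _ 0 (fun i => `|z i 0|) i). Qed.

Lemma inf_pos (z : 'cV[R]_N) : z != 0 -> 0 < nq z.
Proof.
move/nz_ex => [i hi]; apply: lt_le_trans (inf_le z i).
by rewrite normr_gt0.
Qed.

Lemma inf_tri (y z : 'cV[R]_N) : nq (y + z) <= nq y + nq z.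
Proof.
apply: bigmax_le; first by rewrite addr_ge0 // inf_ge0.
move=> i _; rewrite mxE; apply: le_trans (ler_normD _ _) _.
by rewrite lerD // inf_le.
Qed.

Lemma inf_L2 (k : nat) (S : {set 'I_N}) (y : 'cV[R]_N) : (#|S| <= k)%N ->
  \sum_(i in S) `|y i 0| <= k%:R * nq y.
Proof.
move=> hS; apply: le_trans (_ : \sum_(i in S) nq y <= _).
  by apply: ler_sum => i _; apply: inf_le.
rewrite sumr_const -[_ *+ #|S|]mulr_natl ler_wpM2r ?inf_ge0 //.
by rewrite ler_nat.
Qed.

Lemma inf_L3 (k : nat) (h : 'cV[R]_N) : h != 0 ->
  k%:R < three_factor (+oo%E : \bar R) * sq +oo%E h -> 3 * k%:R * nq h < l1norm h.
Proof.
move=> h0; rewrite /three_factor /sq /= => hk.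
have p := inf_pos h0.
have : 3 * k%:R < l1norm h / linfnorm h.
  by rewrite -(ltr_pM2l (_ : 0 < 3^-1)) // mulrA mulVf // mul1r.
by rewrite ltr_pdivlMr.
Qed.
End Inf.


Section Real.
Variables (R : realType) (N : nat) (r : R).
Hypothesis r1 : 1 < r.
Local Notation nq := (@lqnorm R N r%:E).

Let r0 : 0 < r. Proof. by apply: lt_trans r1. Qed.
Let e := 1 - r^-1.
Let e0 : 0 < e.
Proof. by rewrite /e subr_gt0 invf_lt1. Qed.

Lemma real_ge0 (z : 'cV[R]_N) : 0 <= nq z.
Proof. exact: powR_ge0. Qed.

Lemma real_pos (z : 'cV[R]_N) : z != 0 -> 0 < nq z.
Proof.
move/nz_ex => [i hi]; apply: powR_gt0.
rewrite (bigD1 i) //=; apply: (@lt_le_trans _ _ (`|z i 0| `^ r)).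
  by apply: powR_gt0; rewrite normr_gt0.
by rewrite lerDl sumr_ge0 // => j _; rewrite powR_ge0.
Qed.

Lemma real_tri (y z : 'cV[R]_N) : nq (y + z) <= nq y + nq z.
Proof.
rewrite /lqnorm.
under eq_bigr do rewrite mxE.
by apply: (minkowski_fin (fun i => y i 0) (fun i => z i 0)); rewrite ltW.
Qed.

Lemma real_L2 (k : nat) (S : {set 'I_N}) (y : 'cV[R]_N) : (#|S| <= k)%N ->
  \sum_(i in S) `|y i 0| <= k%:R `^ e * nq y.
Proof.
move=> hS.
pose q := e^-1.
have q0 : 0 < q by rewrite invr_gt0.
have pq : r^-1 + q^-1 = 1 by rewrite invrK /e addrC subrK.
have := hoelder_fin (fun i => y i 0) (fun i => (i \in S)%:R) r0 q0 pq.
have -> : \sum_i `|y i 0 * (i \in S)%:R| = \sum_(i in S) `|y i 0|.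
  rewrite [RHS]big_mkcond; apply: eq_bigr => i _.
  by case: (i \in S); rewrite ?mulr1 ?mulr0 ?normr0.
have -> : \sum_i `|((i \in S)%:R : R)| `^ q = #|S|%:R.
  rewrite (eq_bigr (fun i => if i \in S then 1 else 0)); last first.
    by move=> i _; case: (i \in S); rewrite ?normr1 ?powR1 ?normr0 ?powR0 // gt_eqF.
  by rewrite -big_mkcond sumr_const.
move/le_trans; apply; rewrite mulrC ler_wpM2r ?real_ge0 // /q invrK.
by apply: ge0_ler_powR; rewrite ?nnegrE ?ler_nat // ltW.
Qed.

Lemma real_L3 (k : nat) (h : 'cV[R]_N) : h != 0 ->
  k%:R < three_factor r%:E * sq r%:E h -> 3 * k%:R `^ e * nq h < l1norm h.
Proof.
move=> h0; rewrite /three_factor /sq => hk.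
have p := real_pos h0.
have rho0 : 0 <= l1norm h / nq h.
  by rewrite divr_ge0 ?real_ge0 // /l1norm sumr_ge0.
set rho := l1norm h / nq h in rho0 hk *.
have kn : (k%:R : R) \in Num.nneg by rewrite nnegrE.
have rn : 3 `^ (r / (1 - r)) * rho `^ (r / (r - 1)) \in Num.nneg.
  by rewrite nnegrE mulr_ge0 ?powR_ge0.
have := @gt0_ltr_powR R e e0 k%:R _ kn rn hk.
rewrite powRM ?powR_ge0 // -!powRrM.
have -> : r / (1 - r) * e = -1.
  by rewrite /e; field; rewrite gt_eqF // subr_eq0 lt_eqF.
have -> : r / (r - 1) * e = 1.
  by rewrite /e; field; rewrite gt_eqF // subr_eq0 gt_eqF.
rewrite powR_inv1 // powRr1 //.
move=> hk'.
have : 3 * k%:R `^ e < l1norm h / nq h.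
  by rewrite -(ltr_pM2l (_ : 0 < 3^-1)) // mulrA mulVf // mul1r.
by rewrite ltr_pdivlMr.
Qed.
End Real.

Lemma arith (R : realType) (a b L D H P T c : R) :
  a + P - 2 * T <= L -> T <= c * H -> 3 * c * H < P -> a <= c * b ->
  D <= b + H -> 0 < b -> 0 < D -> 0 <= a -> 0 <= c -> 0 <= H ->
  a / b < L / D.
Proof.
move=> h1 h2 h3 h4 h5 b0 D0 a0 c0 H0.
rewrite ltr_pdivrMr // mulrAC ltr_pdivlMr //.
have e1 : a * D <= a * (b + H) by rewrite ler_wpM2l.
have e2 : a * H <= c * b * H by rewrite ler_wpM2r.
have e3 : (a + P - 2 * T) * b <= L * b by rewrite ler_wpM2r // ltW.
have e4 : T * b <= c * H * b by rewrite ler_wpM2r // ltW.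
have e5 : 3 * c * H * b < P * b by rewrite ltr_pM2r.
nra.
Qed.

Lemma core (R : realType) (N : nat) (nq : 'cV[R]_N -> R) (c : R)
  (S : {set 'I_N}) (x h : 'cV[R]_N) :
  (forall i, i \notin S -> x i 0 = 0) ->
  (forall z, z != 0 -> 0 < nq z) -> (forall z, 0 <= nq z) ->
  nq (x + h) <= nq x + nq h ->
  (forall y : 'cV[R]_N, \sum_(i in S) `|y i 0| <= c * nq y) ->
  0 <= c ->
  3 * c * nq h < l1norm h -> x != 0 -> x + h != 0 ->
  l1norm x / nq x < l1norm (x + h) / nq (x + h).
Proof.
move=> xS npos nge0 tri L2 c0 L3 x0 w0.
have l1x : l1norm x = \sum_(i in S) `|x i 0|.
  rewrite /l1norm [RHS]big_mkcond /=; apply: eq_bigr => i _.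
  by case: ifP => // /negbT /xS ->; rewrite normr0.
apply: (@arith _ _ _ _ _ _ (l1norm h) (\sum_(i in S) `|h i 0|) c) => //.
- rewrite l1x /l1norm (big_mkcond (fun i => i \in S)) /=.
  rewrite [in X in _ - X]big_mkcond /= mulr_sumr -big_split -sumrB /=.
  apply: ler_sum => i _; rewrite mxE.
  case: ifP => iS.
    have := ler_normD (x i 0 + h i 0) (- h i 0).
    rewrite addrK normrN; lra.
  by rewrite xS ?iS // !add0r mulr0 subr0.
- by move: l1x; rewrite /l1norm => ->; apply: L2.
- exact: npos.
- exact: npos.
- by rewrite /l1norm sumr_ge0 // => i _.
Qed.

Lemma finish (R : realType) (m N : nat) (A : 'M[R]_(m, N)) (q : \bar R) (c : R)
  (k : nat) (x : 'cV[R]_N) :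
  (forall z : 'cV[R]_N, 0 <= lqnorm q z) -> (forall z : 'cV[R]_N, z != 0 -> 0 < lqnorm q z) ->
  (forall y z : 'cV[R]_N, lqnorm q (y + z) <= lqnorm q y + lqnorm q z) ->
  (forall (S : {set 'I_N}) (y : 'cV[R]_N), (#|S| <= k)%N ->
      \sum_(i in S) `|y i 0| <= c * lqnorm q y) ->
  0 <= c ->
  (forall h, A *m h = 0 -> h != 0 -> 3 * c * lqnorm q h < l1norm h) ->
  x != 0 -> ksparse k x ->
  is_solution q A (A *m x) x /\
  (forall z : 'cV[R]_N, is_solution q A (A *m x) z -> z = x).
Proof.
move=> nge0 npos tri L2 c0 L3 hx0 hxk.
set S := [set i : 'I_N | x i 0 != 0].
have xS : forall i, i \notin S -> x i 0 = 0.
  by move=> i; rewrite inE negbK => /eqP.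
have key : forall w, A *m w = A *m x -> w != x -> w != 0 ->
    l1norm x / lqnorm q x < l1norm w / lqnorm q w.
  move=> w Aw wx w0.
  have -> : w = x + (w - x) by rewrite addrC subrK.
  apply: (core (nq := lqnorm q) (c := c) (S := S)) => //.
  - by move=> y; apply: L2.
  - apply: L3; first by rewrite mulmxBr Aw subrr.
    by rewrite subr_eq0.
  - by rewrite addrC subrK.
split.
  split => //; split => // w w0 Aw.
  have [->|wx] := eqVneq w x; first by [].
  exact/ltW/key.
move=> z [z0 [Az hmin]].
apply/eqP/negPn/negP => zx.
have := hmin x hx0 erefl.
by rewrite leNgt key.
Qed.

Unset Implicit Arguments.
Local Open Scope classical_set_scope.

Theorem proposition3 (R : realType) (m N : nat) (A : 'M[R]_(m, N))
  (q : \bar R) (hq : (1%:E < q)%E) (k : nat) (x : 'cV[R]_N)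
  (hx0 : x != 0) (hxk : ksparse k x)
  (hk : ((k%:R)%:E < ereal_inf
          [set (three_factor q * sq q h)%:E | h in [set h : 'cV[R]_N | A *m h = 0%R /\ h != 0%R]])%E) :
  is_solution q A (A *m x) x /\
  (forall z : 'cV[R]_N, is_solution q A (A *m x) z -> z = x).
Proof.
have hkh : forall h : 'cV[R]_N, A *m h = 0 -> h != 0 -> k%:R < three_factor q * sq q h.
  move=> h Ah h0; rewrite -lte_fin; apply: (lt_le_trans hk).
  by apply: ereal_inf_lbound; exists h.
case: q hq hk hkh => [r| |] hq hk hkh //.
- have r1 : 1 < r by rewrite -lte_fin.
  apply: (finish (c := k%:R `^ (1 - r^-1)) (k := k)) => //.
  + exact: real_ge0.
  + exact: real_pos.
  + exact: real_tri.
  + by move=> S y; apply: real_L2.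
  + by move=> h Ah h0; apply: real_L3 => //; apply: hkh.
- apply: (finish (c := k%:R) (k := k)) => //.
  + exact: inf_ge0.
  + exact: inf_pos.
  + exact: inf_tri.
  + by move=> S y; apply: inf_L2.
  + by move=> h Ah h0; apply: inf_L3 => //; apply: hkh.
Qed.
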